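(* Let $n$ be a positive integer and $k$ an integer with $0\le k\le n$. Then $$e_k\left(\left\{\csc^2\left(\tfrac{(2j-1)\pi}{4n+2}\right) : j=1,\dots,n\right\}\right) = \frac{(n+k)!\,4^k}{(2k)!\,(n-k)!}.$$
   Context: $e_k(\alpha_1,\dots,\alpha_n)$ denotes the degree-$k$ elementary symmetric function of $\alpha_1,\dots,\alpha_n$ (with $e_0=1$). *)

(* Defs.v *)
From Stdlib Require Import Reals List.
Open Scope R_scope.

Fixpoint esym (l : list R) (k : nat) : R :=
  match k with
  | O => 1
  | S k' =>
      match l with
      | nil => 0
      | x :: l' => esym l' (S k') + x * esym l' k'
      end
  end.

Definition csc (x : R) : R := / sin x.

Definition csc2_list (n : nat) : list R :=
  map (fun j : nat => (csc ((2 * INR j - 1) * PI / (4 * INR n + 2))) ^ 2)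
      (seq 1 n).

(* Main.v *)
Require Import Defs.
From Stdlib Require Import Reals List Arith.
From Stdlib Require Import Lra Lia.
Open Scope R_scope.

Fixpoint Q (n : nat) (s : R) : R :=
  match n with
  | O => 1
  | S O => 1 - 4 * s
  | S ((S m) as m') => (2 - 4 * s) * Q m' s - Q m s
  end.

Lemma trigQ (n : nat) (t : R) : cos ((2 * INR n + 1) * t) = cos t * Q n (sin t ^ 2).
Proof.
  assert (H : forall n, cos ((2 * INR n + 1) * t) = cos t * Q n (sin t ^ 2) /\
                   cos ((2 * INR (S n) + 1) * t) = cos t * Q (S n) (sin t ^ 2)).
  { induction n0 as [|n0 [IH1 IH2]].
    - split.
      + simpl. replace ((2 * 0 + 1) * t) with t by ring. ring.
      + simpl. replace ((2 * 1 + 1) * t) with (2 * t + t) by ring.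
        rewrite cos_plus, cos_2a_sin, sin_2a. ring.
    - split; [exact IH2|].
      replace ((2 * INR (S (S n0)) + 1) * t) with ((2 * INR (S n0) + 1) * t + 2 * t)
        by (rewrite !S_INR; ring).
      assert (E : cos ((2 * INR n0 + 1) * t) = cos ((2 * INR (S n0) + 1) * t - 2 * t))
        by (f_equal; rewrite S_INR; ring).
      rewrite cos_minus in E. rewrite cos_plus.
      change (Q (S (S n0)) (sin t ^ 2)) with
        ((2 - 4 * sin t ^ 2) * Q (S n0) (sin t ^ 2) - Q n0 (sin t ^ 2)).
      rewrite cos_2a_sin in *.
      assert (sin ((2 * INR (S n0) + 1) * t) * sin (2 * t) =
              cos ((2 * INR n0 + 1) * t) - cos ((2 * INR (S n0) + 1) * t) * cos (2*t)).
      { rewrite E, cos_2a_sin. ring. }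
      rewrite cos_2a_sin in H. rewrite H, IH1, IH2. ring. }
  apply H.
Qed.

Definition th (n j : nat) : R := (2 * INR j - 1) * PI / (4 * INR n + 2).

Lemma th_bounds n j : (1 <= j)%nat -> (j <= n)%nat -> 0 < th n j < PI / 2.
Proof.
  intros H1 H2.
  apply le_INR in H1. apply le_INR in H2. simpl in H1.
  assert (Hpi := PI_RGT_0). assert (Ha : 0 < 4 * INR n + 2) by lra.
  unfold th. split.
  - apply Rdiv_lt_0_compat; [nra|lra].
  - apply (Rmult_lt_reg_r (4 * INR n + 2)); [lra|].
    replace ((2 * INR j - 1) * PI / (4 * INR n + 2) * (4 * INR n + 2)) with ((2 * INR j - 1) * PI) by (field; lra).
    nra.
Qed.

Lemma th_lt n i j : (i < j)%nat -> th n i < th n j.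
Proof.
  intros H. apply lt_INR in H.
  assert (Hpi := PI_RGT_0). assert (Ha : 0 < 4 * INR n + 2) by (assert (0 <= INR n) by apply pos_INR; lra).
  unfold th. unfold Rdiv. apply Rmult_lt_compat_r; [apply Rinv_0_lt_compat; lra|]. nra.
Qed.

Lemma sin_th_pos n j : (1 <= j)%nat -> (j <= n)%nat -> 0 < sin (th n j).
Proof.
  intros H1 H2. destruct (th_bounds n j H1 H2). apply sin_gt_0; lra.
Qed.

Lemma cos_th_pos n j : (1 <= j)%nat -> (j <= n)%nat -> 0 < cos (th n j).
Proof.
  intros H1 H2. destruct (th_bounds n j H1 H2). apply cos_gt_0; lra.
Qed.

Lemma sin2_th_lt n i j : (1 <= i)%nat -> (i < j)%nat -> (j <= n)%nat ->
  sin (th n i) ^ 2 < sin (th n j) ^ 2.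
Proof.
  intros H1 H2 H3.
  destruct (th_bounds n i H1 ltac:(lia)). destruct (th_bounds n j ltac:(lia) H3).
  assert (sin (th n i) < sin (th n j)).
  { apply sin_increasing_1; try lra. apply th_lt; lia. }
  assert (0 < sin (th n i)) by (apply sin_gt_0; lra).
  nra.
Qed.

Lemma cos_th_zero n j : (1 <= j)%nat -> cos ((2 * INR n + 1) * th n j) = 0.
Proof.
  intros H. destruct j as [|m]; [lia|].
  apply cos_eq_0_1. exists (Z.of_nat m). rewrite <- INR_IZR_INZ.
  unfold th. rewrite S_INR.
  assert (0 <= INR n) by apply pos_INR. field. lra.
Qed.

Lemma Q_root n j : (1 <= j)%nat -> (j <= n)%nat -> Q n (sin (th n j) ^ 2) = 0.
Proof.
  intros H1 H2. assert (H := cos_th_zero n j H1). rewrite trigQ in H.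
  assert (Hc := cos_th_pos n j H1 H2).
  destruct (Rmult_integral _ _ H); [lra|assumption].
Qed.

Lemma csc_sin n j : (1 <= j)%nat -> (j <= n)%nat ->
  1 + csc (th n j) ^ 2 * - sin (th n j) ^ 2 = 0.
Proof.
  intros H1 H2. assert (H := sin_th_pos n j H1 H2). unfold csc. field. lra.
Qed.

Definition rhsF (n k : nat) : R :=
  INR (Factorial.fact (n + k)) * 4 ^ k / (INR (Factorial.fact (2 * k)) * INR (Factorial.fact (n - k))).

Module Aux.
From mathcomp Require Import all_boot all_order all_algebra.
From mathcomp Require Import Rstruct ring zify.
Import Order.TTheory GRing.Theory Num.Theory.
Local Open Scope ring_scope.

Lemma esym0 l : Defs.esym l 0 = 1.
Proof. by case: l. Qed.

Lemma esym_gen (l : seq R) (z : R) m : (size l <= m)%N ->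
  \sum_(i < m.+1) Defs.esym l i * z ^+ i = \prod_(y <- l) (1 + y * z).
Proof.
elim: l m => [|y l IH] m Hm.
  rewrite big_nil big_ord_recl /= mulr1 big1 ?addr0 // => i _.
  by rewrite /= mul0r.
case: m Hm => [|m] //= Hm.
have E := IH m.+1 (leqW Hm). rewrite big_ord_recl /= mulr1 in E.
rewrite big_cons big_ord_recl /= mulr1.
rewrite (eq_bigr (fun i : 'I_m.+1 => Defs.esym l (bump 0 i) * z ^+ bump 0 i
      + y * z * (Defs.esym l i * z ^+ i))); last first.
  move=> i _; rewrite /bump /= add1n exprS RplusE RmultE. ring.
rewrite big_split /= -mulr_sumr IH // -E.
rewrite esym0 [RHS]mulrDl mul1r addrA.
done.
Qed.
Fixpoint P (n : nat) : {poly R} :=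
  match n with
  | O => 1
  | S O => 1 - 4%:P * 'X
  | S ((S m) as m') => (2%:P - 4%:P * 'X) * P m' - P m
  end.

Lemma binrec m r : ('C(m.+2, r.+2) + 'C(m, r.+2) = 2 * 'C(m.+1, r.+2) + 'C(m, r))%N.
Proof. rewrite !binS. lia. Qed.

Lemma coefP n0 k0 : (P n0)`_k0 = ('C(n0 + k0, 2 * k0))%:R * (-4) ^+ k0.
Proof.
have H : forall n, (forall k, (P n)`_k = ('C(n + k, 2 * k))%:R * (-4) ^+ k) /\
                   (forall k, (P n.+1)`_k = ('C(n.+1 + k, 2 * k))%:R * (-4) ^+ k).
  elim=> [|n [IH1 IH2]].
    split=> k.
      rewrite /= coefC add0n. case: k => [|k] /=; first by rewrite bin0 expr0 mulr1.
      by rewrite bin_small ?mul0r //; lia.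
    rewrite /= coefB coefC coefCM coefX.
    case: k => [|[|k]] /=; first by rewrite bin0 expr0 mulr1 mulr0 subr0.
      have -> : 'C(1+1, 2*1) = 1%N by [].
      rewrite expr1 mulr1 sub0r; ring.
    by rewrite bin_small ?mul0r ?mulr0 ?subr0 //; lia.
  split=> // k.
  rewrite [P _.+2]/= coefB mulrBl coefB coefCM -mulrA coefCM coefXM IH1 IH2.
  case: k => [|k]; first by rewrite /= !addn0 !bin0 !expr0 !mulr1; ring.
  rewrite /= IH2.
  have E := binrec (n + k).+1 (2 * k).
  have E' : ('C(n.+2 + k.+1, 2 * k.+1))%:R = 2 * ('C(n.+1 + k.+1, 2 * k.+1))%:R
          + ('C(n.+1 + k, 2 * k))%:R - ('C(n + k.+1, 2 * k.+1))%:R :> R.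
    have -> : (2 * k.+1 = (2 * k).+2)%N by lia.
    have -> : (n.+2 + k.+1 = (n + k).+1.+2)%N by lia.
    have -> : (n.+1 + k.+1 = (n + k).+1.+1)%N by lia.
    have -> : (n.+1 + k = (n + k).+1)%N by lia.
    have -> : (n + k.+1 = (n + k).+1)%N by lia.
    have E2 := congr1 (fun x => x%:R : R) E. rewrite natrD natrD natrM in E2.
    apply: (addIr ('C((n + k).+1, (2 * k).+2))%:R). rewrite E2. ring.
  rewrite E' exprS. ring.
by case: (H n0).
Qed.

Lemma R4 : (IZR 4 : R) = 4%:R.
Proof. by rewrite IZRposE INRE. Qed.
Lemma R2 : (IZR 2 : R) = 2%:R.
Proof. by rewrite IZRposE INRE. Qed.

Lemma hornerP n0 x : (P n0).[x] = Q n0 x.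
Proof.
have H : forall n, (P n).[x] = Q n x /\ (P n.+1).[x] = Q n.+1 x.
  elim=> [|n [IH1 IH2]].
    split; first by rewrite /= hornerE.
    by rewrite /= !hornerE RminusE RmultE R4.
  split=> //. rewrite [P _]/= !hornerE IH1 IH2 /=.
  by rewrite !RminusE !RmultE R4 R2.
by case: (H n0).
Qed.

Lemma listmap (f : nat -> R) s : List.map f s = map f s.
Proof. by elim: s => //= a s ->. Qed.

Lemma listseq a b : List.seq a b = iota a b.
Proof. by elim: b a => //= b IH a; rewrite IH. Qed.

Lemma key (n k : nat) (hn : Peano.le 1 n) (hk : Peano.le k n) :
  Defs.esym (csc2_list n) k = rhsF n k.
Proof.
set l := csc2_list n.
have Hl : l = [seq csc (th n j) ^+ 2 | j <- iota 1 n].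
  by rewrite /l /csc2_list listmap listseq; apply: eq_map => j; rewrite RpowE.
have Hsize : size l = n by rewrite Hl size_map size_iota.
have PE : P n = \poly_(i < n.+1) (P n)`_i.
  apply/polyP => i; rewrite coef_poly; case: ltnP => // Hi.
  by rewrite coefP bin_small ?mul0r //; lia.
set D := \poly_(i < n.+1) ((P n)`_i - (-1) ^+ i * Defs.esym l i).
have evalD x : D.[x] = (P n).[x] - \prod_(y <- l) (1 + y * (- x)).
  rewrite horner_poly -(@esym_gen _ _ n); last by rewrite Hsize.
  rewrite {2}PE horner_poly -sumrB. apply: eq_bigr => i _.
  by rewrite mulrBl [(- x) ^+ _]exprNn mulrCA mulrA.
set s := fun j => sin (th n j) ^+ 2.
have D0 : D = 0.
  apply/eqP; apply/negPn/negP => Dn0.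
  have Hall : all (root D) (0 :: map s (iota 1 n)).
    rewrite /= ; apply/andP; split.
      rewrite /root evalD horner_coef0 coefP addn0 bin0 expr0 mulr1.
      by rewrite big1 ?subrr // => y _; rewrite oppr0 mulr0 addr0.
    apply/allP => x /mapP [j Hj ->].
    rewrite mem_iota in Hj. have [Hj1 Hj2] : (1 <= j /\ j <= n)%N by lia.
    rewrite /root evalD hornerP /s -RpowE Q_root; [|apply/ssrnat.leP; lia|apply/ssrnat.leP; lia].
    rewrite sub0r oppr_eq0; apply/eqP/eqP; rewrite prodf_seq_eq0.
    apply/hasP; exists (csc (th n j) ^+ 2).
      by rewrite Hl; apply: map_f; rewrite mem_iota; lia.
    have := csc_sin n j (elimT ssrnat.leP Hj1) (elimT ssrnat.leP Hj2).
    rewrite !RpowE RplusE RmultE RoppE R1E => H. by rewrite /= H.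
  have Huniq : uniq (0 :: map s (iota 1 n)).
    rewrite /=; apply/andP; split.
      apply/mapP => [[j Hj E]].
      rewrite mem_iota in Hj. have [Hj1 Hj2] : (1 <= j /\ j <= n)%N by lia.
      have := sin_th_pos n j (elimT ssrnat.leP Hj1) (elimT ssrnat.leP Hj2).
      move/RltP; rewrite /s in E => Hp.
      have : 0 < sin (th n j) ^+ 2 by rewrite exprn_gt0.
      by rewrite -E ltxx.
    rewrite map_inj_in_uniq ?iota_uniq // => i j Hi Hj Eij.
    rewrite !mem_iota in Hi Hj.
    have Hi1 : (1 <= i)%N by lia. have Hj1 : (1 <= j)%N by lia.
    have Hin : (i <= n)%N by lia. have Hjn : (j <= n)%N by lia.
    case: (ltngtP i j) => // Hij; exfalso.
      have := sin2_th_lt n i j (elimT ssrnat.leP Hi1) (elimT ssrnat.ltP Hij) (elimT ssrnat.leP Hjn).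
      by rewrite /s in Eij; rewrite !RpowE Eij => /Rlt_irrefl.
    have := sin2_th_lt n j i (elimT ssrnat.leP Hj1) (elimT ssrnat.ltP Hij) (elimT ssrnat.leP Hin).
    by rewrite /s in Eij; rewrite !RpowE Eij => /Rlt_irrefl.
  have := max_poly_roots Dn0 Hall Huniq.
  rewrite /= size_map size_iota.
  have := size_poly n.+1 (fun i => (P n)`_i - (-1) ^+ i * Defs.esym l i).
  rewrite -/D => H1 H2. by move: (leq_trans H2 H1); rewrite ltnn.
have Ek : Defs.esym l k = ('C(n + k, 2 * k))%:R * 4 ^+ k.
  have := congr1 (fun p : {poly R} => p`_k) D0.
  rewrite /D coef_poly coef0.
  have -> : (k < n.+1)%N by apply/ssrnat.ltP; lia.
  move/eqP; rewrite subr_eq0 coefP => /eqP.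
  rewrite -[4]opprK exprNn => E.
  have -> : Defs.esym l k = (-1) ^+ k * ((-1) ^+ k * Defs.esym l k).
    by rewrite signrMK.
  by rewrite -E mulrCA signrMK.
rewrite Ek /rhsF !factE RdivE !RmultE !INRE RpowE.
rewrite R4.
have Hb := bin_fact (n := n + k) (m := 2 * k) ltac:(apply/ssrnat.leP; lia).
rewrite (_ : (n + k - 2 * k = n - k)%N) in Hb; last lia.
rewrite -Hb natrM natrM.
rewrite mulrAC mulfK //.
by rewrite mulf_neq0 // pnatr_eq0 -lt0n fact_gt0.
Qed.
End Aux.

Theorem mainTheorem11 (n k : nat) (hn : (1 <= n)%nat) (hk : (k <= n)%nat) :
  esym (csc2_list n) k =
  INR (Factorial.fact (n + k)) * 4 ^ k / (INR (Factorial.fact (2 * k)) * INR (Factorial.fact (n - k))).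
Proof.
  exact (Aux.key n k hn hk).
Qed.
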